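(* Let $G$ be a simple graph of order $n$ and let $\alpha\ge2$ be an integer. If $\lambda(G)\le\frac{n}{\alpha}$, then $$i_\alpha(G)\ge\left(\frac{1}{\alpha(\alpha-1)}-\frac{1}{n}\right)\frac{(\alpha-1)(\alpha-2)}{\alpha}\left(\frac{n}{\alpha-1}\right)^{\alpha}.$$
   Context: $\lambda(G)$ is the spectral radius of the adjacency matrix of $G$. For a positive integer $s$, $i_s(G)$ denotes the number of independent sets of size $s$ in $G$. *)

(* Defs.v *)
From HB Require Import structures.
From mathcomp Require Import all_boot all_order all_algebra all_field.
Set Implicit Arguments. Unset Strict Implicit. Unset Printing Implicit Defensive.
Import Order.TTheory GRing.Theory Num.Theory.
Local Open Scope ring_scope.

Definition simple_graph (n : nat) (e : rel 'I_n) : Prop :=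
  symmetric e /\ irreflexive e.

Definition adjmx (n : nat) (e : rel 'I_n) : 'M[algC]_n :=
  \matrix_(i, j) (e i j)%:R.

(* The multiset of eigenvalues (roots of the characteristic polynomial,
   with multiplicity) of a square matrix over algC. *)
Definition eigenvalues (n : nat) (A : 'M[algC]_n) : seq algC :=
  sval (closed_field_poly_normal (char_poly A)).

(* Spectral radius: the maximum modulus of an eigenvalue (0 if n = 0). *)
Definition spectral_radius (n : nat) (A : 'M[algC]_n) : algC :=
  \big[Num.max/0]_(z <- eigenvalues A) `|z|.

Definition lambda_G (n : nat) (e : rel 'I_n) : algC := spectral_radius (adjmx e).

Definition indep_count (n : nat) (e : rel 'I_n) (s : nat) : nat :=
  #|[set S : {set 'I_n} | (#|S| == s)%N &&
        [forall x in S, forall y in S, ~~ e x y]]|.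

(* Main.v *)
Require Import Defs.
From HB Require Import structures.
From mathcomp Require Import all_boot all_order all_algebra all_field.
From mathcomp Require Import zify ring lra.
Import Order.TTheory GRing.Theory Num.Theory.
Local Open Scope ring_scope.

Lemma stepQ (N c : rat) (K : nat -> rat) :
  (forall s, 0 <= K s) ->
  (forall s, (s.+1%:R) ^+ 2 * K s.+1 ^+ 2 <=
             K s * (N * K s.+1 + s%:R * (s.+2%:R * K s.+2))) ->
  N * (1 - c) * K 1 <= 2 * K 2 ->
  forall s, N * (1 - s.+1%:R * c) * K s.+1 <= (s.+2)%:R * K s.+2.
Proof.
move=> K0 MM base; elim=> [|s IH]; first by rewrite mul1r.
have M := MM s.+1.
have [K1z|K1p] := eqVneq (K s.+1) 0.
  have : K s.+2 ^+ 2 <= 0.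
    move: M; rewrite K1z => M.
    have h : 0 < (s.+2%:R : rat) ^+ 2 by rewrite exprn_gt0 ?ltr0Sn.
    nra.
  rewrite (real_exprn_even_le0 _ _) ?num_real // => /eqP ->.
  by rewrite mulr0 mulr_ge0 ?ler0n.
have K1pos : 0 < K s.+1 by rewrite lt_def K1p K0.
have sp : 0 < s.+1%:R :> rat by rewrite ltr0Sn.
rewrite -(ler_pM2l (mulr_gt0 sp K1pos)).
have P : 0 <= K s.+2 * s.+2%:R * ((s.+2)%:R * K s.+2 - N * (1 - s.+1%:R * c) * K s.+1).
  by rewrite !mulr_ge0 ?ler0n ?K0 // subr_ge0.
move: M P; rewrite -!natr1.
set a := (s%:R : rat); set K1 := K s.+1; set K2 := K s.+2; set K3 := K s.+3.
move=> M P.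
nra.
Qed.

Lemma chainQ (N c : rat) (r : nat) (K : nat -> rat) :
  0 < N -> (forall s, 0 <= K s) -> r%:R * c <= 1 -> K 1%N = N ->
  (forall s, N * (1 - s.+1%:R * c) * K s.+1 <= (s.+2)%:R * K s.+2) ->
  forall t, (t.+1 <= r)%N -> ('C(r, t.+1))%:R * (N / r%:R) ^+ t.+1 <= K t.+1.
Proof.
move=> N0 K0 rc K1 st; elim=> [|t IH] ht.
  have r0 : r%:R != 0 :> rat by rewrite pnatr_eq0 -lt0n.
  by rewrite bin1 expr1 mulrC divfK // K1.
have r0 : 0 < r%:R :> rat by rewrite ltr0n; apply: leq_ltn_trans ht.
have IH' := IH (ltnW ht).
have key : (t.+2)%:R * ('C(r, t.+2))%:R = (r%:R - t.+1%:R) * ('C(r, t.+1))%:R :> rat.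
  by rewrite -natrM mul_bin_left natrM natrB // ltnW.
have t2 : 0 < (t.+2)%:R :> rat by rewrite ltr0Sn.
rewrite -(ler_pM2l t2) mulrA key.
apply: le_trans (st t).
set u := N / r%:R; have Nu : N = r%:R * u by rewrite /u mulrC divfK // gt_eqF.
have u0 : 0 <= u by rewrite /u divr_ge0 // ltW.
set C1 := ('C(r, t.+1))%:R : rat.
have C10 : 0 <= C1 by rewrite ler0n.
move: IH'; rewrite -/u -/C1 => IH'.
have hc : r%:R - t.+1%:R <= r%:R * (1 - t.+1%:R * c).
  have : t.+1%:R * (r%:R * c) <= t.+1%:R * 1 by rewrite ler_wpM2l ?ler0n.
  lra.
have hq : 0 <= r%:R - t.+1%:R :> rat by rewrite -natrB ?ler0n // ltnW.
rewrite exprS Nu.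
set x := u ^+ t.+1 in IH' *.
set q := r%:R - t.+1%:R in hc hq *.
set y := 1 - t.+1%:R * c in hc *.
set K1' := K t.+1 in IH' *.
have x0 : 0 <= x by rewrite exprn_ge0.
have : q * (u * (C1 * x)) <= q * (u * K1') by rewrite ler_wpM2l // ler_wpM2l.
have : q * (u * K1') <= r%:R * y * (u * K1').
  by rewrite ler_wpM2r // mulr_ge0 // K0.
nra.
Qed.

Lemma finalQ (n al : nat) (k : nat -> nat) (S : nat) :
  (2 <= al)%N -> (S * al <= n ^ 2)%N -> (2 * k 2%N + S = n * n.-1)%N -> k 1%N = n ->
  (forall s, s.+1 ^ 2 * k s.+1 ^ 2 <= k s * (n * k s.+1 + s * (s.+2 * k s.+2)))%N ->
  ((al%:R * (al%:R - 1))^-1 - (n%:R)^-1)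
    * ((al%:R - 1) * (al%:R - 2) / al%:R)
    * (n%:R / (al%:R - 1)) ^+ al <= (k al)%:R :> rat.
Proof.
move=> al2 Sal base k1 MM.
case: n Sal base k1 MM => [|n'] Sal base k1 MM.
  by rewrite mul0r expr0n /= gtn_eqF ?mulr0 ?ler0n // ltnW.
set n := n'.+1.
case: al al2 Sal MM => [//|r] al2 Sal MM.
have r1 : (1 <= r)%N by [].
have ar : (r.+1%:R : rat) - 1 = r%:R by rewrite -natr1 addrK.
have ar2 : (r.+1%:R : rat) - 2 = r%:R - 1 by rewrite -natr1 -addrA; congr (_ + _); lra.
rewrite ar ar2.
set N := n%:R : rat; set a := r.+1%:R : rat; set R := r%:R : rat.
have N0 : 0 < N by rewrite ltr0Sn.
have R0 : 0 < R by rewrite ltr0n.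
have a0 : 0 < a by rewrite ltr0Sn.
have aR : a = R + 1 by rewrite /a -natr1.
have R1 : 1 <= R by rewrite ler1n.
set d := (a * R)^-1 - N^-1.
have [dle|dgt] := lerP d 0.
  apply: le_trans (ler0n _ _).
  rewrite -mulrA mulr_le0_ge0 // mulr_ge0 //.
    by rewrite divr_ge0 ?(ltW a0) // mulr_ge0 ?subr_ge0 // ltW.
  by rewrite exprn_ge0 // divr_ge0 // ltW.
set K := fun s => (k s)%:R : rat.
have K0 : forall s, 0 <= K s by move=> s; rewrite ler0n.
set c := N^-1 + a^-1.
have MMQ : forall s, (s.+1%:R) ^+ 2 * K s.+1 ^+ 2 <=
             K s * (N * K s.+1 + s%:R * (s.+2%:R * K s.+2)).
  move=> s; have := MM s; rewrite -(ler_nat rat).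
  by rewrite !(natrM, natrD, natrX).
have K1 : K 1%N = N by rewrite /K k1.
have iN : N * N^-1 = 1 by rewrite divff ?gt_eqF.
have ia : a * a^-1 = 1 by rewrite divff ?gt_eqF.
have iaR : (a * R) * (a * R)^-1 = 1 by rewrite divff // gt_eqF // mulr_gt0.
have iNp : 0 < N^-1 by rewrite invr_gt0.
have iap : 0 < a^-1 by rewrite invr_gt0.
have baseQ : N * (1 - c) * K 1%N <= 2 * K 2%N.
  have SQ : (S%:R : rat) * a <= N ^+ 2.
    by move: Sal; rewrite -(ler_nat rat) natrM natrX.
  have B : 2 * K 2%N + S%:R = N * (N - 1).
    move/(congr1 (fun m => m%:R : rat)): base; rewrite natrD natrM /=.
    rewrite natrM => ->; by rewrite /N -natr1 addrK.
  rewrite K1 /c.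
  have SQ' : (S%:R : rat) <= N ^+ 2 * a^-1.
    have := ler_wpM2r (ltW iap) SQ; rewrite -mulrA ia mulr1 //.
  have E : N * (1 - (N^-1 + a^-1)) * N = N * (N - 1) - N ^+ 2 * a^-1.
    by field; rewrite nat1r -/n !pnatr_eq0.
  by rewrite E -B -addrA gerDl subr_le0.
have st := @stepQ N c K K0 MMQ baseQ.
have rc : R * c <= 1.
  have h1 : R * (a * R)^-1 = a^-1.
    apply: (mulfI (_ : a != 0)); first by rewrite gt_eqF.
    by rewrite mulrA iaR ia.
  have : R * N^-1 < R * (a * R)^-1 by rewrite ltr_pM2l // -subr_gt0.
  rewrite /c h1 mulrDr => h.
  have : R * a^-1 + a^-1 = 1 by rewrite -{2}(mul1r a^-1) -mulrDl -aR ia.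
  move: h; generalize (R / N) (R / a) (a^-1) => x y z; lra.
have ch := @chainQ N c r K N0 K0 rc K1 st r.-1.
move: ch; rewrite prednK // binn mul1r => /(_ (leqnn r)) ch.
have s1 := st r.-1.
rewrite prednK // in s1.
have e1 : 1 - R * c = R * d.
  rewrite /c /d mulrDr mulrBr.
  have h1 : R * (a * R)^-1 = a^-1.
    apply: (mulfI (_ : a != 0)); first by rewrite gt_eqF.
    by rewrite mulrA iaR ia.
  rewrite h1.
  have : R * a^-1 + a^-1 = 1 by rewrite -{2}(mul1r a^-1) -mulrDl -aR ia.
  move=> h; rewrite -{1}h; ring.
rewrite e1 in s1.
rewrite exprS.
set u := N / R in ch *.
have Nu : N = R * u by rewrite /u mulrC divfK // gt_eqF.
rewrite Nu in s1.
set P := u ^+ r in ch *.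
have P0 : 0 <= P by rewrite exprn_ge0 // divr_ge0 // ltW.
have u0 : 0 <= u by rewrite divr_ge0 // ltW.
rewrite -/(K r.+1).
have h2 : R * u * (R * d) * P <= a * K r.+1.
  apply: le_trans s1; rewrite ler_wpM2l //.
  apply: mulr_ge0; apply: mulr_ge0 => //; exact: ltW.
have ia' : a^-1 * a = 1 by rewrite mulrC.
have h3 : d * ((R * (R - 1)) / a) * (u * P) <= R * u * (R * d) * P * a^-1.
  have := mulr_ge0 (mulr_ge0 (mulr_ge0 (mulr_ge0 (ltW dgt) u0) P0) (ltW R0)) (ltW iap).
  have -> : R * u * (R * d) * P * a^-1 =
     d * ((R * (R - 1)) / a) * (u * P) + d * u * P * R * a^-1 by ring.
  by rewrite lerDl.
apply: (le_trans h3).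
have := ler_wpM2r (ltW iap) h2.
by rewrite [a * _ / a]mulrAC ia mul1r.
Qed.

Local Open Scope sesquilinear_scope.

Lemma bigmax_abs_ge (s : seq algC) z : z \in s ->
  `|z| <= \big[Num.max/0]_(y <- s) `|y|.
Proof.
have real_max : forall t : seq algC, (\big[Num.max/0]_(y <- t) `|y|) \is Num.real.
  elim=> [|a t IH]; first by rewrite big_nil real0.
  rewrite big_cons /Num.max /Order.max; case: ifP => _ //; exact: normr_real.
elim: s => [//|a s IH]; rewrite inE big_cons => /orP[/eqP->|zs].
  by rewrite comparable_le_max ?lexx // real_comparable ?normr_real.
rewrite comparable_le_max ?real_comparable ?normr_real //.
by rewrite IH ?orbT.
Qed.

Lemma eig_le_lambda n (A : 'M[algC]_n) a : eigenvalue A a ->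
  `|a| <= spectral_radius A.
Proof.
rewrite eigenvalue_root_char => ra; apply: bigmax_abs_ge.
rewrite /eigenvalues; case: closed_field_poly_normal => s /= Es.
move: ra; rewrite Es rootZ ?root_prod_XsubC //.
by rewrite lead_coef_eq0 monic_neq0 ?char_poly_monic.
Qed.

Lemma sum_adj_le n (e : rel 'I_n) : simple_graph e ->
  ((\sum_i \sum_j (e i j : nat))%N)%:R <= n%:R * lambda_G e :> algC.
Proof.
move=> [esym eirr].
set A := adjmx e.
have AtC : A ^t* = A.
  by apply/matrixP => i j; rewrite !mxE conjC_nat esym.
have : A \is normalmx by apply/normalmxP; rewrite AtC.
move/orthomx_spectralP.
set P := spectralmx A; set d := spectral_diag A => EA.
have Pu : P \is unitarymx := spectral_unitarymx A.
have PV : invmx P = P ^t* := invmx_unitary Pu.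
have Punit : P \in unitmx := spectral_unit A.
have PtP : P ^t* *m P = 1%:M by rewrite -PV mulVmx.
have PPt : P *m P ^t* = 1%:M by apply/unitarymxP.
have Aij : forall i j, A i j = \sum_k (P k i)^* * d 0 k * P k j.
  move=> i j; rewrite EA PV mxE; apply: eq_bigr => k _.
  by rewrite mul_mx_diag !mxE.
have eig : forall k, `|d 0 k| <= lambda_G e.
  move=> k; apply: eig_le_lambda; apply/eigenvalueP; exists (row k P).
    rewrite -/A -row_mul EA PV !mulmxA PPt mul1mx.
    apply/rowP => j; rewrite !mxE (bigD1 k) //= big1 ?addr0; first by rewrite mxE eqxx mulr1n.
    by move=> i /negbTE ik; rewrite mxE eq_sym ik mulr0n mul0r.
  apply/eqP => /(congr1 (mulmx^~ (P ^t*))); rewrite -row_mul PPt mul0mx.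
  move/rowP/(_ k); rewrite !mxE eqxx /= => /eqP; by rewrite oner_eq0.
set y := fun k => \sum_j P k j.
have yy : forall k, `|y k| ^+ 2 = \sum_i \sum_j (P k i)^* * P k j.
  move=> k; rewrite normCK /y rmorph_sum mulr_suml exchange_big /=.
  by apply: eq_bigr => i _; rewrite mulr_sumr; apply: eq_bigr => j _; rewrite mulrC.
have ex3 : forall F : 'I_n -> 'I_n -> 'I_n -> algC,
    \sum_i \sum_j \sum_k F i j k = \sum_k \sum_i \sum_j F i j k.
  move=> F; under eq_bigr => i _ do rewrite exchange_big /=.
  by rewrite exchange_big.
have Sn : \sum_k `|y k| ^+ 2 = n%:R.
  transitivity (\sum_i \sum_j (P ^t* *m P) i j); last first.
    have -> : n%:R = \sum_(i < n) (1 : algC) by rewrite sumr_const card_ord.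
    rewrite PtP; apply: eq_bigr => i _.
    rewrite (bigD1 i) //= big1 ?addr0; first by rewrite mxE eqxx.
    by move=> j /negbTE ji; rewrite mxE eq_sym ji.
  under [RHS]eq_bigr => i _ do under eq_bigr => j _ do rewrite mxE.
  rewrite ex3; apply: eq_bigr => k _; rewrite yy.
  by apply: eq_bigr => i _; apply: eq_bigr => j _; rewrite !mxE.
have SA : ((\sum_i \sum_j (e i j : nat))%N)%:R = \sum_k d 0 k * `|y k| ^+ 2 :> algC.
  rewrite natr_sum; under eq_bigr => i _ do rewrite natr_sum.
  transitivity (\sum_i \sum_j A i j).
    by apply: eq_bigr => i _; apply: eq_bigr => j _; rewrite mxE.
  under eq_bigr => i _ do under eq_bigr => j _ do rewrite Aij.
  rewrite ex3; apply: eq_bigr => k _; rewrite yy mulr_sumr.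
  apply: eq_bigr => i _; rewrite mulr_sumr; apply: eq_bigr => j _.
  by rewrite mulrA [_ * d 0 k]mulrC.
rewrite -normr_nat SA [n%:R * _]mulrC -Sn mulr_sumr.
apply: le_trans (ler_norm_sum _ _ _) _.
apply: ler_sum => k _; rewrite normrM normrX normr_id.
by rewrite ler_wpM2r ?exprn_ge0 ?normr_ge0 ?eig.
Qed.

Local Close Scope sesquilinear_scope.
Local Close Scope ring_scope.
Set Implicit Arguments. Unset Strict Implicit.

Definition indepS n (e : rel 'I_n) (S : {set 'I_n}) : bool :=
  [forall x in S, forall y in S, ~~ e x y].
Definition isk n (e : rel 'I_n) s (S : {set 'I_n}) : bool :=
  (#|S| == s) && indepS e S.
Definition cext n (e : rel 'I_n) (L : {set 'I_n}) : nat :=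
  \sum_x ((x \notin L) && indepS e (x |: L) : nat).

Lemma kcount n (e : rel 'I_n) s : indep_count e s = \sum_(S | isk e s S) 1.
Proof. by rewrite sum1dep_card. Qed.

Lemma indepP n (e : rel 'I_n) (S : {set 'I_n}) a b : indepS e S -> a \in S -> b \in S -> ~~ e a b.
Proof.
move=> /forallP /(_ a) /implyP H aS bS.
by move: (H aS) => /forallP /(_ b) /implyP; apply.
Qed.

Lemma indepI n (e : rel 'I_n) (S : {set 'I_n}) : (forall a b, a \in S -> b \in S -> ~~ e a b) ->
  indepS e S.
Proof.
move=> H; apply/forallP => a; apply/implyP => aS; apply/forallP => b.
by apply/implyP => bS; apply: H.
Qed.

Lemma indep_sub n (e : rel 'I_n) (A B : {set 'I_n}) : A \subset B -> indepS e B -> indepS e A.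
Proof.
move=> AB iB; apply: indepI => a b aA bA.
by apply: (indepP iB); apply: (subsetP AB).
Qed.

Lemma DC n (e : rel 'I_n) s (f : {set 'I_n} -> nat) :
  \sum_(L | isk e s L) cext e L * f L =
  \sum_(K | isk e s.+1 K) \sum_(w in K) f (K :\ w).
Proof.
transitivity (\sum_(L | isk e s L)
   \sum_(x | (x \notin L) && indepS e (x |: L)) f L).
  apply: eq_bigr => L _; rewrite /cext big_distrl /= [RHS]big_mkcond /=.
  by apply: eq_bigr => x _; case: ifP => _; rewrite ?mul1n ?mul0n.
rewrite pair_big_dep [RHS]pair_big_dep /=.
rewrite (reindex_onto (fun p : {set 'I_n} * 'I_n => (p.1 :\ p.2, p.2))
                     (fun p : {set 'I_n} * 'I_n => (p.2 |: p.1, p.2))) /=; last first.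
  by move=> [L x] /= /andP[_ /andP[xL _]]; rewrite setU1K.
apply: eq_bigl => [[K w]] /=.
have [wK|wK] := boolP (w \in K).
  rewrite setD1K // eqxx andbT setD11 /= /isk.
  rewrite [#|K|](cardsD1 w) wK add1n eqSS.
  have [iK|iK] := boolP (indepS e K); last by rewrite !andbF.
  by rewrite !andbT (indep_sub _ iK) ?andbT ?subsetDl.
rewrite andbF; apply/negbTE; apply/negP => /andP[_ /eqP[]] H.
by move: wK; rewrite -H setU11.
Qed.

Lemma mem_xKw n (x w a : 'I_n) (K : {set 'I_n}) :
  a \in x |: K -> a != w -> a \in x |: (K :\ w).
Proof. by rewrite !inE => /orP[->//|aK] aw; rewrite aw aK orbT. Qed.

Lemma cnt_x n (e : rel 'I_n) s (K : {set 'I_n}) x : isk e s.+1 K ->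
  \sum_(w in K) ((x \notin K :\ w) && indepS e (x |: (K :\ w)) : nat)
  <= 1 + s * ((x \notin K) && indepS e (x |: K)).
Proof.
move=> /andP[/eqP cK iK].
set W := [set w in K | (x \notin K :\ w) && indepS e (x |: (K :\ w))].
have -> : \sum_(w in K) ((x \notin K :\ w) && indepS e (x |: (K :\ w)) : nat)
    = #|W|.
  rewrite -sum1_card big_mkcond [RHS]big_mkcond /=; apply: eq_bigr => w _.
  have memW : (w \in W) = (w \in K) && ((x \notin K :\ w) && indepS e (x |: (K :\ w))).
    by rewrite !inE.
  by rewrite memW; case: (w \in K) => //=; case: ((x \notin K :\ w) && _).
have [xK|xK] := boolP (x \in K).
  apply: leq_trans (leq_addr _ _).
  rewrite -(cards1 x); apply: subset_leq_card; apply/subsetP => w.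
  rewrite !inE => /andP[wK /andP[]]; rewrite xK andbT negbK => xw _.
  by rewrite eq_sym.
have [ixK|ixK] /= := boolP (indepS e (x |: K)).
  rewrite muln1 add1n -cK; apply: subset_leq_card; apply/subsetP => w.
  by rewrite inE => /andP[].
rewrite muln0 addn0 leqNgt; apply/negP => /card_gt1P [w1 [w2 [w1W w2W w12]]].
move: w1W w2W; rewrite !inE => /andP[w1K /andP[_ i1]] /andP[w2K /andP[_ i2]].
move/negP: ixK; apply; apply: indepI => a b aX bX.
have [/andP[aw1 bw1]|H1] := boolP ((a != w1) && (b != w1)).
  by apply: (indepP i1); apply: mem_xKw.
have [/andP[aw2 bw2]|H2] := boolP ((a != w2) && (b != w2)).
  by apply: (indepP i2); apply: mem_xKw.
move: H1 H2; rewrite !negb_and !negbK => /orP[]/eqP H1 /orP[]/eqP H2.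
- by move: w12; rewrite -H1 -H2 eqxx.
- by apply: (indepP iK); rewrite ?H1 ?H2.
- by apply: (indepP iK); rewrite ?H1 ?H2.
- by move: w12; rewrite -H1 -H2 eqxx.
Qed.

Lemma cnt_le n (e : rel 'I_n) s (K : {set 'I_n}) : isk e s.+1 K ->
  \sum_(w in K) cext e (K :\ w) <= n + s * cext e K.
Proof.
move=> kK; rewrite /cext exchange_big /=.
have -> : n + s * \sum_x ((x \notin K) && indepS e (x |: K) : nat)
   = \sum_x (1 + s * ((x \notin K) && indepS e (x |: K))).
  by rewrite big_split /= sum1_card card_ord big_distrr.
by apply: leq_sum => x _; apply: cnt_x.
Qed.

Lemma amgm (a b : nat) : 2 * (a * b) <= a ^ 2 + b ^ 2.
Proof. have [H _] := nat_AGM2 a b. move: H. rewrite sqrnD. lia. Qed.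

Lemma CS (I : finType) (P : pred I) (c : I -> nat) :
  (\sum_(i | P i) c i) ^ 2 <= (\sum_(i | P i) 1) * \sum_(i | P i) c i ^ 2.
Proof.
have E1 : (\sum_(i | P i) c i) ^ 2 = \sum_(i | P i) \sum_(j | P j) c i * c j.
  by rewrite expnS expn1 big_distrl /=; apply: eq_bigr => i _; rewrite big_distrr.
have E2 : (\sum_(i | P i) 1) * \sum_(i | P i) c i ^ 2
   = \sum_(i | P i) \sum_(j | P j) c j ^ 2.
  by rewrite big_distrl /=; apply: eq_bigr => i _; rewrite mul1n.
rewrite E1 E2 -(leq_pmul2l (isT : 0 < 2)) big_distrr /=.
apply: (@leq_trans (\sum_(i | P i) \sum_(j | P j) (c i ^ 2 + c j ^ 2))).
  apply: leq_sum => i _; rewrite big_distrr /=; apply: leq_sum => j _.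
  exact: amgm.
rewrite (eq_bigr (fun i => \sum_(j | P j) c i ^ 2 + \sum_(j | P j) c j ^ 2));
  last by move=> i _; rewrite big_split.
by rewrite big_split /= exchange_big /= mul2n -addnn.
Qed.

Lemma sumc n (e : rel 'I_n) s :
  \sum_(L | isk e s L) cext e L = s.+1 * indep_count e s.+1.
Proof.
transitivity (\sum_(L | isk e s L) cext e L * 1).
  by apply: eq_bigr => L _; rewrite muln1.
rewrite (DC e s (fun _ => 1)) kcount big_distrr /=; apply: eq_bigr => K /andP[/eqP cK _].
by rewrite sum1_card cK muln1.
Qed.

Lemma MM n (e : rel 'I_n) s :
  s.+1 ^ 2 * indep_count e s.+1 ^ 2 <=
  indep_count e s * (n * indep_count e s.+1 + s * (s.+2 * indep_count e s.+2)).
Proof.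
have := CS (isk e s) (cext e).
rewrite sumc -kcount -expnMn => H; apply: leq_trans H _; rewrite leq_mul2l.
apply/orP; right.
have E : \sum_(L | isk e s L) cext e L ^ 2 =
    \sum_(K | isk e s.+1 K) \sum_(w in K) cext e (K :\ w).
  by rewrite -DC; apply: eq_bigr => L _; rewrite expnS expn1.
rewrite E -(sumc e s.+1) (kcount e s.+1) !big_distrr /= -big_split /=.
apply: leq_sum => K kK; rewrite muln1; exact: cnt_le.
Qed.

Lemma indep1 n (e : rel 'I_n) v : irreflexive e -> indepS e [set v].
Proof.
move=> irr; apply: indepI => a b; rewrite !inE => /eqP-> /eqP->.
by rewrite irr.
Qed.

Lemma sum_single n (e : rel 'I_n) (g : {set 'I_n} -> nat) : irreflexive e ->
  \sum_(L | isk e 1 L) g L = \sum_v g [set v].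
Proof.
move=> irr.
transitivity (\sum_(L | isk e 1 L) \sum_(v | L == [set v]) g L).
  apply: eq_bigr => L /andP[/cards1P [u ->] _].
  rewrite (big_pred1 u) // => v /=; by rewrite (inj_eq set1_inj) eq_sym.
rewrite (exchange_big_dep xpredT) //=; apply: eq_bigr => v _.
rewrite (big_pred1 [set v]) // => L /=.
case: eqP => [->|]; rewrite ?andbF ?andbT //.
by rewrite /isk cards1 eqxx indep1.
Qed.

Lemma k1 n (e : rel 'I_n) : irreflexive e -> indep_count e 1 = n.
Proof. by move=> irr; rewrite kcount sum_single // sum1_card card_ord. Qed.

Lemma base n (e : rel 'I_n) : symmetric e -> irreflexive e ->
  2 * indep_count e 2 + \sum_i \sum_j (e i j : nat) = n * n.-1.
Proof.
move=> sym irr; rewrite -sumc sum_single // -big_split /=.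
rewrite -[n in n * _]card_ord -sum_nat_const; apply: eq_bigr => v _.
rewrite /cext -big_split /=.
have -> : n.-1 = \sum_x (x != v : nat).
  transitivity (\sum_(x | x != v) 1); last first.
    by rewrite big_mkcond; apply: eq_bigr => x _; case: (x != v).
  rewrite sum1dep_card -[X in X.-1]card_ord.
  have -> : [set x | x != v] = [set~ v] by apply/setP => x; rewrite !inE.
  by rewrite cardsC1 card_ord.
apply: eq_bigr => x _; rewrite inE.
have [->|xv] := eqVneq x v; first by rewrite irr.
have -> : indepS e (x |: [set v]) = ~~ e x v.
  apply/idP/idP => [H|H].
    by apply: (indepP H); rewrite !inE eqxx ?orbT.
  apply: indepI => a b; rewrite !inE => /orP[]/eqP-> /orP[]/eqP->;
    by rewrite ?irr // sym.
by rewrite sym; case: (e v x).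
Qed.

Unset Implicit Arguments.
Local Open Scope ring_scope.

Theorem theorem2p4 (n : nat) (e : rel 'I_n) (alpha : nat) :
  simple_graph e -> (2 <= alpha)%N ->
  lambda_G e <= n%:R / alpha%:R ->
  ((alpha%:R * (alpha%:R - 1))^-1 - (n%:R)^-1)
    * ((alpha%:R - 1) * (alpha%:R - 2) / alpha%:R)
    * (n%:R / (alpha%:R - 1)) ^+ alpha
  <= (indep_count e alpha)%:R :> algC.
Proof.
move=> [sym irr] al2 hl.
have hS := sum_adj_le n e (conj sym irr).
set S := (\sum_i \sum_j (e i j : nat))%N in hS.
have a0 : 0 < alpha%:R :> algC by rewrite ltr0n; apply: leq_trans al2.
have SA : (S * alpha <= n ^ 2)%N.
  rewrite -(ler_nat algC) natrM natrX.
  apply: le_trans (ler_wpM2r (ltW a0) hS) _.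
  rewrite -mulrA.
  have := ler_wpM2r (ltW a0) hl; rewrite divfK ?gt_eqF // => h.
  by rewrite expr2 ler_wpM2l ?ler0n.
have Q := @finalQ n alpha (indep_count e) S al2 SA (base sym irr) (k1 irr) (MM e).
rewrite -(ler_rat algC) in Q.
move: Q; rewrite !(rmorphM, rmorphB, fmorphV, rmorphXn, ratr_nat, rmorph1) /=.
by rewrite !rmorph_nat.
Qed.
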